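(* Let $n\ge 2$, $\sigma\ge 0$, let $z\in\mathbb{C}^n$ satisfy $|z_1|=\cdots=|z_n|=1$, let $W\in\mathbb{C}^{n\times n}$ be $z$-discordant, and let $C=zz^*+\sigma W$. If $x$ is a global optimizer of \[\max_{x\in\mathbb{C}^n} x^*Cx \quad\text{subject to } |x_1|=\cdots=|x_n|=1\] with global phase such that $z^*x=|z^*x|$, then \[\|x-z\|_\infty\le 6\left(\sqrt{\log n}+29\sigma\right)\sigma n^{-1/2}.\]
   Context: For $z\in\mathbb{C}^n$ with unit-modulus entries, a matrix $W\in\mathbb{C}^{n\times n}$ is called $z$-discordant if it is Hermitian and satisfies both $\|W\|_{\mathrm{op}}\le 3\sqrt{n}$ (operator norm = largest singular value) and $\|Wz\|_\infty\le 3\sqrt{n\log n}$, with $\log$ the natural logarithm. *)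

(* Defs.v *)
From HB Require Import structures.
From mathcomp Require Import all_boot all_order all_algebra.
From mathcomp Require Import complex.
From mathcomp Require Import classical_sets reals exp.
Set Implicit Arguments. Unset Strict Implicit. Unset Printing Implicit Defensive.
Import Order.TTheory GRing.Theory Num.Theory.
Local Open Scope ring_scope.

Section Defs.
Variable R : realType.
Local Notation C := R[i].

Definition cmod (x : C) : R := Normc.normc x.

Definition mxadj m n (A : 'M[C]_(m, n)) : 'M[C]_(n, m) := (map_mx Num.conj A)^T.

Definition hermitian n (A : 'M[C]_n) : Prop := mxadj A = A.

Definition vnorm2 n (v : 'cV[C]_n) : R := Num.sqrt (\sum_i cmod (v i 0) ^+ 2).
Definition vnorminf n (v : 'cV[C]_n) : R := \big[Num.max/0]_i cmod (v i 0).

Definition opnorm n (A : 'M[C]_n) : R :=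
  sup [set vnorm2 (A *m v) | v in [set v : 'cV[C]_n | vnorm2 v = 1]]%classic.

Definition unimodular n (x : 'cV[C]_n) : Prop := forall i, cmod (x i 0) = 1.

Definition discordant n (z : 'cV[C]_n) (W : 'M[C]_n) : Prop :=
  [/\ hermitian W,
      opnorm W <= 3 * Num.sqrt n%:R
    & vnorminf (W *m z) <= 3 * Num.sqrt (n%:R * ln n%:R)].

Definition qform n (A : 'M[C]_n) (x : 'cV[C]_n) : C := (mxadj x *m A *m x) 0 0.

Definition global_opt n (A : 'M[C]_n) (x : 'cV[C]_n) : Prop :=
  unimodular x /\
  forall y : 'cV[C]_n, unimodular y -> Re (qform A y) <= Re (qform A x).

End Defs.

(* Main.v *)
Require Import Defs.
From HB Require Import structures.
From mathcomp Require Import all_boot all_order all_algebra.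
From mathcomp Require Import complex.
From mathcomp Require Import classical_sets reals exp.
From mathcomp Require Import ring lra.
Import Order.TTheory GRing.Theory Num.Theory.
Set Implicit Arguments. Unset Strict Implicit. Unset Printing Implicit Defensive.
Local Open Scope ring_scope.

Section Aux.
Variable R : realType.
Local Notation C := R[i].
Implicit Types c d : C.
Local Notation Re := (@complex.Re R).
Local Notation Im := (@complex.Im R).

Lemma cReM c d : Re (c * d) = Re c * Re d - Im c * Im d.
Proof. by case: c => ? ?; case: d => ? ? /=; reflexivity. Qed.
Lemma cImM c d : Im (c * d) = Re c * Im d + Im c * Re d.
Proof. by case: c => a b; case: d => e f /=; ring. Qed.
Lemma cReD c d : Re (c + d) = Re c + Re d.
Proof. by case: c => ? ?; case: d => ? ? /=; reflexivity. Qed.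
Lemma cImD c d : Im (c + d) = Im c + Im d.
Proof. by case: c => ? ?; case: d => ? ? /=; reflexivity. Qed.
Lemma cReN c : Re (- c) = - Re c.
Proof. by case: c => ? ? /=; reflexivity. Qed.
Lemma cImN c : Im (- c) = - Im c.
Proof. by case: c => ? ? /=; reflexivity. Qed.
Lemma cReB c d : Re (c - d) = Re c - Re d.
Proof. by rewrite cReD cReN. Qed.
Lemma cImB c d : Im (c - d) = Im c - Im d.
Proof. by rewrite cImD cImN. Qed.
Lemma cReJ c : Re (Num.conj c) = Re c.
Proof. by case: c => ? ? /=; reflexivity. Qed.
Lemma cImJ c : Im (Num.conj c) = - Im c.
Proof. by case: c => ? ? /=; reflexivity. Qed.
Lemma cReR (a : R) : Re (a%:C)%C = a.
Proof. by []. Qed.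
Lemma cImR (a : R) : Im (a%:C)%C = 0.
Proof. by []. Qed.
Lemma cRe0 : Re (0 : C) = 0. Proof. by []. Qed.
Lemma cIm0 : Im (0 : C) = 0. Proof. by []. Qed.
Lemma cRe1 : Re (1 : C) = 1. Proof. by []. Qed.
Lemma cIm1 : Im (1 : C) = 0. Proof. by []. Qed.

Lemma cRe_sum (I : finType) (f : I -> C) : Re (\sum_i f i) = \sum_i Re (f i).
Proof. by apply: (big_morph _ cReD cRe0). Qed.
Lemma cIm_sum (I : finType) (f : I -> C) : Im (\sum_i f i) = \sum_i Im (f i).
Proof. by apply: (big_morph _ cImD cIm0). Qed.

Lemma cmod_ge0 c : 0 <= cmod c.
Proof. by case: c => a b; rewrite /cmod /= sqrtr_ge0. Qed.
Lemma cmod_sq c : cmod c ^+ 2 = Re c ^+ 2 + Im c ^+ 2.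
Proof. by case: c => a b; rewrite /cmod /= sqr_sqrtr // addr_ge0 // sqr_ge0. Qed.
Lemma cnormE c : `|c| = ((cmod c)%:C)%C.
Proof. by case: c => ? ? /=; reflexivity. Qed.
Lemma cmodD c d : cmod (c + d) <= cmod c + cmod d.
Proof. by rewrite -lecR rmorphD /= -!cnormE ler_normD. Qed.
Lemma cmodM c d : cmod (c * d) = cmod c * cmod d.
Proof. apply: complexI; by rewrite rmorphM /= -!cnormE normrM. Qed.
Lemma cmod_sum (I : finType) (f : I -> C) : cmod (\sum_i f i) <= \sum_i cmod (f i).
Proof.
rewrite -lecR -cnormE rmorph_sum /=.
apply: (le_trans (ler_norm_sum _ _ _)).
by apply: ler_sum => i _; rewrite cnormE.
Qed.
Lemma cmodN c : cmod (- c) = cmod c.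
Proof. apply: complexI; by rewrite -!cnormE normrN. Qed.
Lemma cmodJ c : cmod (Num.conj c) = cmod c.
Proof. by case: c => a b; rewrite /cmod /= sqrrN. Qed.
Lemma cmodR (a : R) : cmod ((a%:C)%C : C) = `|a|.
Proof. by rewrite /cmod /= expr0n /= addr0 sqrtr_sqr. Qed.
Lemma cmod0 : cmod (0 : C) = 0.
Proof. by rewrite /cmod /= expr0n /= addr0 sqrtr0. Qed.
Lemma cmod_eq0 c : cmod c = 0 -> c = 0.
Proof. exact: Normc.eq0_normc. Qed.

Lemma ReCS c d : `|Re (Num.conj c * d)| <= cmod c * cmod d.
Proof.
rewrite cReM cReJ cImJ.
have h1 : cmod c * cmod d = Num.sqrt ((Re c ^+2 + Im c ^+ 2) * (Re d ^+ 2 + Im d ^+ 2)).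
  by case: c => a b; case: d => e f; rewrite /cmod /= sqrtrM // addr_ge0 // sqr_ge0.
rewrite h1 -sqrtr_sqr ler_sqrt; last by rewrite mulr_ge0 // addr_ge0 // sqr_ge0.
set a := Re c; set b := Im c; set e := Re d; set f := Im d.
have : 0 <= (a * f - b * e) ^+ 2 by apply: sqr_ge0.
nra.
Qed.

Lemma Re_le_cmod c : Re c <= cmod c.
Proof.
case: c => a b; rewrite /cmod /=.
rewrite (le_trans (ler_norm a)) // -sqrtr_sqr ler_sqrt ?addr_ge0 ?sqr_ge0 //.
by rewrite lerDl sqr_ge0.
Qed.

End Aux.

Section Vec.
Variable R : realType.
Local Notation C := R[i].
Local Notation Re := (@complex.Re R).
Local Notation Im := (@complex.Im R).
Variable n : nat.
Implicit Types u v : 'cV[C]_n.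

Definition dot u v : C := \sum_j Num.conj (u j 0) * v j 0.
Definition nrm v : R := \sum_j cmod (v j 0) ^+ 2.

Lemma dotE u v : (mxadj u *m v) 0 0 = dot u v.
Proof. by rewrite mxE; apply: eq_bigr => j _; rewrite !mxE. Qed.

Lemma vnorm2E v : vnorm2 v = Num.sqrt (nrm v).
Proof. by []. Qed.

Lemma nrm_ge0 v : 0 <= nrm v.
Proof. by apply: sumr_ge0 => j _; apply: sqr_ge0. Qed.

Lemma vnorm2_ge0 v : 0 <= vnorm2 v.
Proof. exact: sqrtr_ge0. Qed.

Lemma vnorm2_sq v : vnorm2 v ^+ 2 = nrm v.
Proof. by rewrite vnorm2E sqr_sqrtr // nrm_ge0. Qed.

Lemma dotDr u v w : dot u (v + w) = dot u v + dot u w.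
Proof. by rewrite /dot -big_split; apply: eq_bigr => j _; rewrite mxE mulrDr. Qed.
Lemma dotDl u v w : dot (u + v) w = dot u w + dot v w.
Proof. by rewrite /dot -big_split; apply: eq_bigr => j _; rewrite mxE rmorphD mulrDl. Qed.
Lemma dotNl u v : dot (- u) v = - dot u v.
Proof. by rewrite /dot -sumrN; apply: eq_bigr => j _; rewrite mxE rmorphN mulNr. Qed.
Lemma dotBl u v w : dot (u - v) w = dot u w - dot v w.
Proof. by rewrite dotDl dotNl. Qed.
Lemma dotZr (a : C) u v : dot u (a *: v) = a * dot u v.
Proof. by rewrite /dot mulr_sumr; apply: eq_bigr => j _; rewrite mxE mulrCA. Qed.
Lemma dotZl (a : C) u v : dot (a *: u) v = Num.conj a * dot u v.
Proof. by rewrite /dot mulr_sumr; apply: eq_bigr => j _; rewrite mxE rmorphM mulrA. Qed.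

Lemma Re_dot u v : Re (dot u v) = \sum_j Re (Num.conj (u j 0) * v j 0).
Proof. by rewrite cRe_sum. Qed.
Lemma Im_dot u v : Im (dot u v) = \sum_j Im (Num.conj (u j 0) * v j 0).
Proof. by rewrite cIm_sum. Qed.

Lemma CS_real (f g : 'I_n -> R) :
  (\sum_j f j * g j) ^+ 2 <= (\sum_j f j ^+ 2) * (\sum_j g j ^+ 2).
Proof.
set A := \sum_j f j ^+ 2; set B := \sum_j g j ^+ 2; set P := \sum_j f j * g j.
have quad t : 0 <= t ^+ 2 * A - 2 * t * P + B.
  have -> : t ^+ 2 * A - 2 * t * P + B = \sum_j (t * f j - g j) ^+ 2.
    rewrite /A /B /P mulr_sumr mulr_sumr -sumrN -!big_split /=.
    by apply: eq_bigr => j _; ring.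
  by apply: sumr_ge0 => j _; apply: sqr_ge0.
have A0 : 0 <= A by apply: sumr_ge0 => j _; apply: sqr_ge0.
have [A_eq0|A_gt0] := eqVneq A 0.
  have f0 j : f j = 0.
    have : f j ^+ 2 = 0.
      apply/eqP; move/eqP: A_eq0; rewrite /A psumr_eq0; last by move=> i _; apply: sqr_ge0.
      by move=> /allP /(_ j (mem_index_enum j)) /implyP; apply.
    by move/eqP; rewrite sqrf_eq0 => /eqP.
  have -> : P = 0 by rewrite /P big1 // => j _; rewrite f0 mul0r.
  by rewrite expr0n /= mulr_ge0 //; apply: sumr_ge0 => j _; apply: sqr_ge0.
have Ap : 0 < A by rewrite lt_def A_gt0 A0.
have := quad (P / A).
have -> : (P / A) ^+ 2 * A - 2 * (P / A) * P + B = B - P ^+ 2 / A.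
  by field; rewrite gt_eqF.
rewrite subr_ge0 ler_pdivrMr // => h.
by rewrite mulrC.
Qed.

Lemma sqrt_le_of_sq (a b : R) : 0 <= b -> a ^+ 2 <= b ^+ 2 -> a <= b.
Proof.
move=> b0 h; rewrite (le_trans (ler_norm a)) // -sqrtr_sqr -[b]ger0_norm // -sqrtr_sqr.
by rewrite ler_sqrt // sqr_ge0.
Qed.

Lemma ReCS_vec u v : `|Re (dot u v)| <= vnorm2 u * vnorm2 v.
Proof.
rewrite Re_dot.
apply: (le_trans (ler_norm_sum _ _ _)).
apply: (@le_trans _ _ (\sum_j cmod (u j 0) * cmod (v j 0))).
  by apply: ler_sum => j _; apply: ReCS.
apply: sqrt_le_of_sq; first by rewrite mulr_ge0 // vnorm2_ge0.
by rewrite exprMn !vnorm2_sq; apply: CS_real.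
Qed.

Lemma entry_le u (i : 'I_n) : cmod (u i 0) <= vnorm2 u.
Proof.
apply: sqrt_le_of_sq; first exact: vnorm2_ge0.
rewrite vnorm2_sq /nrm (bigD1 i) //= lerDl.
by apply: sumr_ge0 => j _; apply: sqr_ge0.
Qed.

Lemma nrm_eq0 v : nrm v = 0 -> forall j, v j 0 = 0.
Proof.
move=> h j; apply: cmod_eq0.
have : cmod (v j 0) ^+ 2 = 0.
  apply/eqP; move: h; rewrite /nrm => /eqP; rewrite psumr_eq0; last by move=> i _; apply: sqr_ge0.
  by move=> /allP /(_ j (mem_index_enum j)) /implyP; apply.
by move/eqP; rewrite sqrf_eq0 => /eqP.
Qed.

Lemma nrmZ (a : R) v : nrm ((a%:C)%C *: v) = a ^+ 2 * nrm v.
Proof.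
rewrite /nrm mulr_sumr; apply: eq_bigr => j _.
by rewrite mxE cmodM cmodR exprMn real_normK // num_real.
Qed.

Lemma vnorm2Z (a : R) v : 0 <= a -> vnorm2 ((a%:C)%C *: v) = a * vnorm2 v.
Proof.
move=> a0; rewrite !vnorm2E nrmZ sqrtrM ?sqr_ge0 // sqrtr_sqr ger0_norm //.
Qed.

End Vec.

Section Mat.
Variable R : realType.
Local Notation C := R[i].
Local Notation Re := (@complex.Re R).
Local Notation Im := (@complex.Im R).
Variable n : nat.
Implicit Types u v : 'cV[C]_n.

Lemma mulmx_entry (A : 'M[C]_n) v i : (A *m v) i 0 = \sum_k A i k * v k 0.
Proof. by rewrite mxE. Qed.

Lemma delta_entry (i j : 'I_n) : (delta_mx i 0 : 'cV[C]_n) j 0 = (i == j)%:R.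
Proof. by rewrite mxE eqxx andbT eq_sym. Qed.

Lemma dot_delta (i : 'I_n) v : dot (delta_mx i 0) v = v i 0.
Proof.
rewrite /dot (bigD1 i) //= big1 ?addr0.
  by rewrite delta_entry eqxx rmorph1 mul1r.
by move=> j /negbTE ji; rewrite delta_entry eq_sym ji rmorph0 mul0r.
Qed.

Lemma mul_delta_entry (A : 'M[C]_n) (i j : 'I_n) : (A *m (delta_mx i 0 : 'cV[C]_n)) j 0 = A j i.
Proof. by rewrite -colE mxE. Qed.

Lemma nrm_delta (i : 'I_n) : nrm (delta_mx i 0 : 'cV[C]_n) = 1.
Proof.
rewrite /nrm (bigD1 i) //= big1 ?addr0.
  by rewrite delta_entry eqxx cmodR normr1 expr1n.
by move=> j /negbTE ji; rewrite delta_entry eq_sym ji cmodR normr0 expr0n.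
Qed.

Lemma vnorm2_delta (i : 'I_n) : vnorm2 (delta_mx i 0 : 'cV[C]_n) = 1.
Proof. by rewrite vnorm2E nrm_delta sqrtr1. Qed.

Lemma herm_entry (W : 'M[C]_n) : Defs.hermitian W -> forall i j, Num.conj (W j i) = W i j.
Proof. by move=> hW i j; rewrite -{2}hW !mxE. Qed.

Lemma dot_herm (W : 'M[C]_n) u v : Defs.hermitian W ->
  dot u (W *m v) = Num.conj (dot v (W *m u)).
Proof.
move=> hW; rewrite /dot rmorph_sum /=.
under eq_bigr => j _ do rewrite mulmx_entry mulr_sumr.
under [RHS]eq_bigr => k _ do rewrite mulmx_entry rmorphM /= conjCK rmorph_sum mulr_sumr.
rewrite exchange_big /=; apply: eq_bigr => j _; apply: eq_bigr => k _.
rewrite rmorphM /= herm_entry //; ring.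
Qed.

Lemma Re_dot_herm (W : 'M[C]_n) u v : Defs.hermitian W ->
  Re (dot u (W *m v)) = Re (dot v (W *m u)).
Proof. by move=> hW; rewrite dot_herm // cReJ. Qed.

Lemma nrm0_mul (W : 'M[C]_n) v : nrm v = 0 -> nrm (W *m v) = 0.
Proof.
move=> h; rewrite /nrm big1 // => i _.
rewrite mulmx_entry big1 ?cmod0 ?expr0n // => k _.
by rewrite (nrm_eq0 h) mulr0.
Qed.

Section Op.
Variable W : 'M[C]_n.
Variable i0 : 'I_n.

Let S := [set vnorm2 (W *m v) | v in [set v : 'cV[C]_n | vnorm2 v = 1]]%classic.

Lemma opS_sup : has_sup S.
Proof.
split.
  by exists (vnorm2 (W *m delta_mx i0 0)); exists (delta_mx i0 0) => //=; rewrite vnorm2_delta.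
exists (Num.sqrt (\sum_i (\sum_k cmod (W i k)) ^+ 2)).
move=> _ [v /= v1 <-]; rewrite vnorm2E ler_sqrt; last first.
  by apply: sumr_ge0 => i _; apply: sqr_ge0.
apply: ler_sum => i _.
have h : cmod ((W *m v) i 0) <= \sum_k cmod (W i k).
  rewrite mulmx_entry; apply: (le_trans (cmod_sum _)).
  apply: ler_sum => k _; rewrite cmodM.
  rewrite -[X in _ <= X]mulr1 ler_wpM2l ?cmod_ge0 //.
  by rewrite -v1 entry_le.
rewrite !expr2 ler_pM // ?cmod_ge0 //.
Qed.

Lemma opnorm_ub v : vnorm2 v = 1 -> vnorm2 (W *m v) <= opnorm W.
Proof.
move=> v1; have := sup_upper_bound opS_sup; apply.
by exists v.
Qed.

Lemma opnorm_ge0 : 0 <= opnorm W.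
Proof.
apply: le_trans (opnorm_ub (vnorm2_delta i0)); exact: vnorm2_ge0.
Qed.

Lemma opnorm_le v : vnorm2 (W *m v) <= opnorm W * vnorm2 v.
Proof.
have [h0|hp] := eqVneq (nrm v) 0.
  by rewrite !vnorm2E nrm0_mul // h0 sqrtr0 mulr0.
set s := vnorm2 v.
have s0 : 0 < s.
  rewrite /s vnorm2E sqrtr_gt0 lt_def hp nrm_ge0 //.
have hu : vnorm2 (((s^-1)%:C)%C *: v) = 1.
  rewrite vnorm2Z; last by rewrite invr_ge0 ltW.
  by rewrite mulVf // gt_eqF.
have := opnorm_ub hu.
rewrite -scalemxAr vnorm2Z; last by rewrite invr_ge0 ltW.
by rewrite ler_pdivrMl // mulrC.
Qed.

End Op.

End Mat.

Section Main.
Variable R : realType.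
Local Notation C := R[i].
Local Notation Re := (@complex.Re R).
Local Notation Im := (@complex.Im R).
Variable n : nat.
Implicit Types u v : 'cV[C]_n.
Implicit Types c d : C.

Lemma dotC u v : dot u v = Num.conj (dot v u).
Proof.
rewrite /dot rmorph_sum; apply: eq_bigr => j _.
by rewrite rmorphM /= conjCK mulrC.
Qed.

Lemma cReJM c : Re (Num.conj c * c) = Re c ^+ 2 + Im c ^+ 2.
Proof. by rewrite cReM cReJ cImJ; ring. Qed.
Lemma cImJM c : Im (Num.conj c * c) = 0.
Proof. by rewrite cImM cReJ cImJ; ring. Qed.

Lemma cReRM (a : R) c : Re ((a%:C)%C * c) = a * Re c.
Proof. by rewrite cReM cReR cImR mul0r subr0. Qed.

Lemma entry11 (A : 'M[C]_(1, n)) (B : 'M[C]_(n, 1)) (P : 'M[C]_(1, 1)) :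
  (A *m (B *m P)) 0 0 = (A *m B) 0 0 * P 0 0.
Proof. by rewrite mulmxA [in LHS]mxE big_ord1. Qed.

Lemma addmx_entry m p (A B : 'M[C]_(m, p)) i j : (A + B) i j = A i j + B i j.
Proof. by rewrite mxE. Qed.
Lemma scalemx_entry m p (a : C) (A : 'M[C]_(m, p)) i j : (a *: A) i j = a * A i j.
Proof. by rewrite mxE. Qed.

Lemma ReqC (z : 'cV[C]_n) (W : 'M[C]_n) (sigma : R) v :
  Re (qform (z *m mxadj z + (sigma%:C)%C *: W) v) =
  Re (dot z v) ^+ 2 + Im (dot z v) ^+ 2 + sigma * Re (dot v (W *m v)).
Proof.
rewrite /qform -mulmxA mulmxDl -scalemxAl -mulmxA mulmxDr -scalemxAr.
rewrite addmx_entry scalemx_entry entry11 !dotE cReD cReRM.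
congr (_ + _).
by rewrite dotC cReJM.
Qed.


Lemma NumReE c : Num.Theory.Re c = ((Re c)%:C)%C.
Proof. by rewrite ReE ReJ_add. Qed.

Lemma sub_entry m p (A B : 'M[C]_(m, p)) i j : (A - B) i j = A i j - B i j.
Proof. by rewrite !mxE. Qed.

Lemma sq_unit c : cmod c = 1 -> Re c ^+ 2 + Im c ^+ 2 = 1.
Proof. by move=> h; rewrite -cmod_sq h expr1n. Qed.

Lemma sum_cst1 : \sum_(j < n) (1 : R) = n%:R.
Proof. by rewrite sumr_const card_ord. Qed.

Section Hyp.
Variables (sigma : R) (z x : 'cV[C]_n) (W : 'M[C]_n).
Hypothesis hs : 0 <= sigma.
Hypothesis hz : unimodular z.
Hypothesis hxo : global_opt (z *m mxadj z + (sigma%:C)%C *: W) x.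
Hypothesis hph : (mxadj z *m x) 0 0 = `|(mxadj z *m x) 0 0|.
Hypothesis hH : Defs.hermitian W.

Let hx : unimodular x. Proof. by case: hxo. Qed.

Let m := Re (dot z x).

Lemma Im_zx : Im (dot z x) = 0.
Proof. by move: hph; rewrite dotE cnormE => ->. Qed.

Lemma m_ge0 : 0 <= m.
Proof. by rewrite /m; move: hph; rewrite dotE cnormE => ->; apply: cmod_ge0. Qed.

Lemma dot_zz_Re : Re (dot z z) = n%:R.
Proof.
rewrite Re_dot -sum_cst1; apply: eq_bigr => j _.
by rewrite cReJM sq_unit.
Qed.

Lemma dot_zz_Im : Im (dot z z) = 0.
Proof. by rewrite Im_dot big1 // => j _; rewrite cImJM. Qed.

Lemma nrm_xmz : nrm (x - z) = 2 * n%:R - 2 * m.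
Proof.
rewrite /m Re_dot /nrm -sum_cst1 mulr_sumr mulr_sumr -sumrB.
apply: eq_bigr => j _.
rewrite sub_entry cmod_sq cReB cImB cReM cReJ cImJ.
have h1 := sq_unit (hx j); have h2 := sq_unit (hz j).
set a := Re (x j 0) in h1 *; set b := Im (x j 0) in h1 *.
set p := Re (z j 0) in h2 *; set q := Im (z j 0) in h2 *.
rewrite mulr1; nra.
Qed.

Lemma nrm_xpz : nrm (x + z) = 2 * n%:R + 2 * m.
Proof.
rewrite /m Re_dot /nrm -sum_cst1 mulr_sumr mulr_sumr -big_split.
apply: eq_bigr => j _.
rewrite addmx_entry cmod_sq cReD cImD cReM cReJ cImJ.
have h1 := sq_unit (hx j); have h2 := sq_unit (hz j).
set a := Re (x j 0) in h1 *; set b := Im (x j 0) in h1 *.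
set p := Re (z j 0) in h2 *; set q := Im (z j 0) in h2 *.
rewrite mulr1 /=; nra.
Qed.

Lemma O1 : n%:R ^+ 2 + sigma * Re (dot z (W *m z)) <= m ^+ 2 + sigma * Re (dot x (W *m x)).
Proof.
case: hxo => _ /(_ z hz); rewrite !NumReE lecR !ReqC dot_zz_Re dot_zz_Im Im_zx.
by rewrite expr0n /= !addr0.
Qed.

Lemma cross : Re (dot x (W *m x)) - Re (dot z (W *m z)) = Re (dot (x - z) (W *m (x + z))).
Proof.
rewrite mulmxDr dotBl !dotDr !cReB !cReD (Re_dot_herm x z hH).
ring.
Qed.

End Hyp.
End Main.
Section Real.
Variable R : realFieldType.

Lemma le_of_sq (a b : R) : 0 <= b -> a ^+ 2 <= b ^+ 2 -> a <= b.
Proof.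
move=> b0 h; rewrite leNgt; apply/negP => ba.
have : b ^+ 2 < a ^+ 2 by nra.
lra.
Qed.

Lemma Ereal (N m s K D S : R) : 2 <= N -> 0 <= m -> 0 <= s -> 0 <= K -> K ^+ 2 <= 9 * N ->
  0 <= D -> 0 <= S -> D ^+ 2 = 2 * N - 2 * m -> S ^+ 2 = 2 * N + 2 * m ->
  N ^+ 2 - m ^+ 2 <= s * (D * (K * S)) -> N - m <= 36 * s ^+ 2.
Proof.
move=> hN hm hs hK hK2 hD hS hD2 hS2 h.
have mN : m <= N by nra.
set P := N ^+ 2 - m ^+ 2.
have P0 : 0 <= P by rewrite /P; nra.
have hP2 : P ^+ 2 <= s ^+ 2 * K ^+ 2 * (4 * P).
  have -> : s ^+ 2 * K ^+ 2 * (4 * P) = (s * (D * (K * S))) ^+ 2.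
    rewrite !exprMn hD2 hS2 /P; ring.
  have h0 : 0 <= s * (D * (K * S)) by rewrite !mulr_ge0.
  by rewrite !expr2 ler_pM.
have hP : P <= 4 * s ^+ 2 * K ^+ 2.
  have [->|Pp] := eqVneq P 0; first by rewrite !mulr_ge0 // ?sqr_ge0.
  have Pp' : 0 < P by rewrite lt_def Pp P0.
  by nra.
have : (N - m) * N <= 36 * s ^+ 2 * N.
  have : (N - m) * N <= P by rewrite /P; nra.
  have : 4 * s ^+ 2 * K ^+ 2 <= 36 * s ^+ 2 * N.
    have hs2 : 0 <= s ^+ 2 by apply: sqr_ge0.
    nra.
  lra.
rewrite ler_pM2r //; lra.
Qed.

Lemma key (r s l E D : R) :
  2 <= r^+2 -> 0 <= r -> 0 <= l -> l <= r -> 0 <= s -> 3 * s * l + 87 * s^+2 <= r ->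
  0 <= E -> E <= 36 * s^+2 -> 0 <= D -> D <= 17/2 * s ->
  r^+2 * (l + D) <= (l + 29*s)*(r^+2 + 1 - E - 3*s*r).
Proof.
move=> hr2 hr hl hlr hs hc hE hE2 hD hD2.
have hs2 : 87 * s^+2 <= r by nra.
have hr1 : 1 <= r by nra.
have hP : 0 <= 35/2 * r^+2 + 29 - 12 * r by nra.
have hP2 : (123 * r * s)^+2 <= (35/2 * r^+2 + 29 - 12 * r)^+2 by nra.
have hP3 : 123 * r * s <= 35/2 * r^+2 + 29 - 12 * r.
  by apply: le_of_sq.
have h1 : r^+2 * D <= 17/2 * s * r^+2 by nra.
have hsr : 0 <= s * r by exact: mulr_ge0.
have h2 : 3 * s * r * l <= 3 * s * r^+2 by nra.
have hs2' : 0 <= s^+2 by nra.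
have h3 : l * E <= 36 * s^+2 * r by nra.
have h4 : 29 * s * E <= 1044 * s^+3 by nra.
have h5 : 1044 * s^+2 <= 12 * r by nra.
have h6 : 1044 * s^+3 <= 12 * r * s by nra.
have h7 : s * (123 * r * s) <= s * (35/2 * r^+2 + 29 - 12 * r) by rewrite ler_wpM2l.
nra.
Qed.

Lemma fin (r s l E D d : R) :
  2 <= r^+2 -> 0 <= r -> 0 <= l -> l <= r -> 0 <= s ->
  0 <= E -> E <= 36 * s^+2 -> 0 <= D -> D ^+ 2 = 2 * E -> 0 <= d -> d <= 2 ->
  d * (r^+2 + 1 - E - 3 * s * r) <= 6 * s * r * (l + D) ->
  d <= 6 * (l + 29 * s) * s / r.
Proof.
move=> hr2 hr hl hlr hs hE hE2 hD hDE hd hd2 h.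
have rp : 0 < r by nra.
rewrite ler_pdivlMr //.
have [big|small] := lerP (2 * r) (6 * (l + 29 * s) * s).
  by nra.
have hc : 3 * s * l + 87 * s^+2 <= r by nra.
have hD2 : D <= 17/2 * s.
  apply: le_of_sq; first by nra.
  nra.
have hk := key hr2 hr hl hlr hs hc hE hE2 hD hD2.
set den := r^+2 + 1 - E - 3 * s * r in h hk.
have hs2 : 87 * s^+2 <= r by nra.
have hden : 0 < den.
  rewrite /den.
  have h1 : 3 * s * r <= r^+2 / 2.
    have : 6 * s <= r by apply: le_of_sq => //; nra.
    nra.
  nra.
have : d * den * r <= 6 * (l + 29 * s) * s * den.
  have : d * den * r <= 6 * s * r ^+ 2 * (l + D).
    have := ler_wpM2r hr h; nra.
  have : 6 * s * (r ^+ 2 * (l + D)) <= 6 * s * ((l + 29 * s) * den).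
    by rewrite ler_wpM2l // mulr_ge0.
  nra.
have -> : d * den * r = (d * r) * den by ring.
by rewrite ler_pM2r.
Qed.

End Real.

Section Fin.
Variable R : realType.
Local Notation C := R[i].
Local Notation Re := (@complex.Re R).
Local Notation Im := (@complex.Im R).
Variables (n : nat) (sigma : R) (z x : 'cV[C]_n) (W : 'M[C]_n).
Hypothesis hn : (2 <= n)%N.
Hypothesis hs : 0 <= sigma.
Hypothesis hz : unimodular z.
Hypothesis hW : discordant z W.
Hypothesis hxo : global_opt (z *m mxadj z + (sigma%:C)%C *: W) x.
Hypothesis hph : (mxadj z *m x) 0 0 = `|(mxadj z *m x) 0 0|.

Let hH : Defs.hermitian W. Proof. by case: hW. Qed.
Let hx : unimodular x. Proof. by case: hxo. Qed.

Lemma coord_raw (i : 'I_n) :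
  (Re (z i 0 - x i 0) ^+ 2 + Im (z i 0 - x i 0) ^+ 2) * (Re (dot z x) + 1 + sigma * Re (W i i))
   + 2 * sigma * Re (Num.conj (z i 0 - x i 0) * (W *m x) i 0) <= 0.
Proof.
set c := z i 0 - x i 0.
set e : 'cV[C]_n := delta_mx i 0.
set y := x + c *: e.
have hy : unimodular y.
  move=> j; rewrite /y addmx_entry scalemx_entry delta_entry /=.
  have [<-|ne] := eqVneq i j; first by rewrite mulr1 /c addrC subrK; apply: hz.
  by rewrite mulr0 addr0; apply: hx.
case: hxo => _ /(_ y hy); rewrite !NumReE lecR !ReqC.
rewrite /y dotDr dotZr (dotC z e) dot_delta.
rewrite mulmxDr -scalemxAr dotDl !dotDr !dotZl !dotZr (dot_herm x e hH) !dot_delta.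
rewrite mul_delta_entry /=.
rewrite !cReD !cImD !cReM !cImM !cReJ !cImJ (Im_zx hph).
rewrite /c !cReB !cImB !cReN !cImN.
have h1 := sq_unit (hx i); have h2 := sq_unit (hz i).
set a := Re (x i 0) in h1 *; set b := Im (x i 0) in h1 *.
set p := Re (z i 0) in h2 *; set q := Im (z i 0) in h2 *.
set M := Re (dot z x); set X := Re (dot x (W *m x)).
set w1 := Re ((W *m x) i 0); set w2 := Im ((W *m x) i 0).
set h := Re (W i i); set k := Im (W i i).
move=> H.
have E : (M + ((p - a) * p - (q - b) * - q)) ^+ 2 + (0 + ((p - a) * - q + (q - b) * p)) ^+ 2
   = M ^+ 2 + (M + 1) * ((p - a) ^+ 2 + (q - b) ^+ 2).
  have hv : ((p - a) * - q + (q - b) * p) ^+ 2 = (a * q - b * p) ^+ 2 by ring.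
  have hs2 : (a * p + b * q) ^+ 2 + (a * q - b * p) ^+ 2 = 1.
    have -> : (a * p + b * q) ^+ 2 + (a * q - b * p) ^+ 2 = (a ^+ 2 + b ^+ 2) * (p ^+ 2 + q ^+ 2) by ring.
    by rewrite h1 h2 mulr1.
  have hg : (p - a) * p - (q - b) * - q = 1 - (a * p + b * q) by nra.
  have hd : (p - a) ^+ 2 + (q - b) ^+ 2 = 2 - 2 * (a * p + b * q) by nra.
  rewrite add0r hv hg hd.
  set s := a * p + b * q in hs2 *.
  nra.
rewrite E in H.
nra.
Qed.

Let N : R := n%:R.
Let r := Num.sqrt N.
Let l := Num.sqrt (ln N).
Let K := opnorm W.
Let m := Re (dot z x).

Let hN2 : 2 <= N. Proof. by rewrite /N (ler_nat R 2 n). Qed.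
Let hN0 : 0 <= N. Proof. exact: le_trans hN2. Qed.
Let i0 : 'I_n := Ordinal (leq_trans (isT : (0 < 2)%N) hn).
Let hK0 : 0 <= K. Proof. exact: (opnorm_ge0 W i0). Qed.
Let hK : K <= 3 * r. Proof. by case: hW. Qed.
Let hr0 : 0 <= r. Proof. exact: sqrtr_ge0. Qed.
Let hr2 : r ^+ 2 = N. Proof. by rewrite sqr_sqrtr. Qed.
Let hl0 : 0 <= l. Proof. exact: sqrtr_ge0. Qed.
Let hlr : l <= r.
Proof.
rewrite /l /r ler_sqrt //; apply: ltW; apply: ln_sublinear.
by apply: lt_le_trans hN2.
Qed.
Let hQ : vnorminf (W *m z) <= 3 * (r * l).
Proof. by case: hW => _ _; rewrite sqrtrM. Qed.

Lemma D_sq : vnorm2 (x - z) ^+ 2 = 2 * (N - m).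
Proof. by rewrite vnorm2_sq (nrm_xmz hz hxo) /N /m mulrBr. Qed.

Lemma mN : m <= N.
Proof. have := sqr_ge0 (vnorm2 (x - z)); rewrite D_sq. lra. Qed.

Lemma Eb : N - m <= 36 * sigma ^+ 2.
Proof.
apply: (@Ereal _ N m sigma K (vnorm2 (x - z)) (vnorm2 (x + z))) => //.
- exact: (m_ge0 hph).
- have h : K ^+ 2 <= (3 * r) ^+ 2 by rewrite !expr2 ler_pM.
  have e : (3 * r) ^+ 2 = 9 * r ^+ 2 by ring.
  by rewrite -hr2 -e.
- exact: vnorm2_ge0.
- exact: vnorm2_ge0.
- by rewrite D_sq mulrBr.
- by rewrite vnorm2_sq (nrm_xpz hz hxo).
have h1 := O1 hz hxo hph.
have h2 := cross z x hH.
have h3 : Re (dot (x - z) (W *m (x + z))) <= vnorm2 (x - z) * (K * vnorm2 (x + z)).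
  apply: le_trans (ler_norm _) _; apply: le_trans (ReCS_vec _ _) _.
  by rewrite ler_wpM2l ?vnorm2_ge0 // (opnorm_le W i0).
have h4 : sigma * Re (dot (x - z) (W *m (x + z))) <= sigma * (vnorm2 (x - z) * (K * vnorm2 (x + z))).
  by rewrite ler_wpM2l.
rewrite -/N -/m in h1.
have h5 : N ^+ 2 - m ^+ 2 <= sigma * (Re (dot x (W *m x)) - Re (dot z (W *m z))) by lra.
rewrite h2 in h5; lra.
Qed.

Lemma cmod_le_Re c : `|Re c| <= cmod c.
Proof.
rewrite ler_norml; apply/andP; split; last exact: Re_le_cmod.
by rewrite lerNl -cReN -cmodN Re_le_cmod.
Qed.

Lemma coord (i : 'I_n) :
  cmod ((x - z) i 0) * (m + 1 - sigma * K) <=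
    2 * sigma * (vnorminf (W *m z) + K * vnorm2 (x - z)).
Proof.
have h := coord_raw i.
set c := z i 0 - x i 0 in h.
have hd : cmod ((x - z) i 0) = cmod c by rewrite sub_entry -cmodN opprB.
rewrite hd; set d := cmod c.
have d0 : 0 <= d by apply: cmod_ge0.
have hdd : Re c ^+ 2 + Im c ^+ 2 = d ^+ 2 by rewrite cmod_sq.
rewrite hdd -/m in h.
set w := (W *m x) i 0 in h.
have hw : cmod w <= vnorminf (W *m z) + K * vnorm2 (x - z).
  have -> : w = (W *m z) i 0 + (W *m (x - z)) i 0.
    by rewrite -addmx_entry -mulmxDr addrC subrK.
  apply: le_trans (cmodD _ _) _; apply: lerD.
    by rewrite /vnorminf; exact: (le_bigmax _ (fun j => cmod ((W *m z) j 0)) i).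
  by apply: le_trans (entry_le _ i) (opnorm_le W i0 _).
have hR : - (d * cmod w) <= Re (Num.conj c * w).
  by rewrite lerNl; apply: le_trans (ReCS c w); rewrite -normrN ler_norm.
have hh : - K <= Re (W i i).
  rewrite lerNl; apply: le_trans (ler_norm _) _; rewrite normrN.
  apply: le_trans (cmod_le_Re _) _.
  rewrite -(mul_delta_entry W i i); apply: le_trans (entry_le _ i) _.
  by apply: le_trans (opnorm_le W i0 _) _; rewrite vnorm2_delta mulr1.
set h1 := Re (W i i) in h hh.
set R2 := Re (Num.conj c * w) in h hR.
have cw0 : 0 <= cmod w by apply: cmod_ge0.
have hm0 : 0 <= m by apply: (m_ge0 hph).
have key1 : d ^+ 2 * (m + 1 - sigma * K) <= 2 * sigma * d * cmod w.
  have : d ^+ 2 * (m + 1 - sigma * K) <= d ^+ 2 * (m + 1 + sigma * h1).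
    rewrite ler_wpM2l ?sqr_ge0 //; have := ler_wpM2l hs hh; lra.
  have := ler_wpM2l hs hR; lra.
have key2 : d * (m + 1 - sigma * K) <= 2 * sigma * cmod w.
  have [->|dp] := eqVneq d 0; first by rewrite mul0r !mulr_ge0.
  have dpos : 0 < d by rewrite lt_def dp d0.
  have : d * (d * (m + 1 - sigma * K)) <= d * (2 * sigma * cmod w).
    have e1 : d * (d * (m + 1 - sigma * K)) = d ^+ 2 * (m + 1 - sigma * K) by ring.
    have e2 : d * (2 * sigma * cmod w) = 2 * sigma * d * cmod w by ring.
    by rewrite e1 e2.
  by rewrite ler_pM2l.
apply: le_trans key2 _.
by rewrite ler_wpM2l // mulr_ge0.
Qed.

Lemma main :
  vnorminf (x - z) <= 6 * (Num.sqrt (ln (n%:R : R)) + 29 * sigma) * sigma / Num.sqrt (n%:R : R).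
Proof.
rewrite -/N -/r -/l.
have B0 : 0 <= 6 * (l + 29 * sigma) * sigma / r.
  by rewrite mulr_ge0 // ?invr_ge0 // !mulr_ge0 // addr_ge0 // mulr_ge0.
rewrite /vnorminf; apply: bigmax_le => // i _.
have hE0 : 0 <= N - m by rewrite subr_ge0 mN.
have hc := coord i.
set d := cmod ((x - z) i 0) in hc *.
set D := vnorm2 (x - z) in hc *.
have d0 : 0 <= d by apply: cmod_ge0.
have D0 : 0 <= D by apply: vnorm2_ge0.
have d2 : d <= 2.
  rewrite /d sub_entry; apply: le_trans (cmodD _ _) _.
  by rewrite cmodN (hx i) (hz i).
apply: (@fin _ r sigma l (N - m) D d) => //.
- by rewrite hr2.
- exact: Eb.
- exact: D_sq.
have hQ' := hQ.
set Q := vnorminf (W *m z) in hc hQ'.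
have e1 : d * (r ^+ 2 + 1 - (N - m) - 3 * sigma * r) <= d * (m + 1 - sigma * K).
  rewrite ler_wpM2l // hr2.
  have : sigma * K <= sigma * (3 * r) by rewrite ler_wpM2l.
  lra.
have e2 : 2 * sigma * (Q + K * D) <= 6 * sigma * r * (l + D).
  have : Q + K * D <= 3 * r * (l + D).
    have : K * D <= 3 * r * D by rewrite ler_wpM2r.
    lra.
  have s2 : 0 <= 2 * sigma by rewrite mulr_ge0.
  move=> h; have := ler_wpM2l s2 h; lra.
lra.
Qed.

End Fin.

Unset Implicit Arguments.

Theorem lemma6 (R : realType) (n : nat) (sigma : R) (z : 'cV[R[i]]_n)
    (W : 'M[R[i]]_n) (x : 'cV[R[i]]_n) :
  (2 <= n)%N -> 0 <= sigma -> unimodular z -> discordant z W ->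
  global_opt (z *m mxadj z + (sigma%:C)%C *: W) x ->
  (mxadj z *m x) 0 0 = `|(mxadj z *m x) 0 0| ->
  vnorminf (x - z)
    <= 6 * (Num.sqrt (ln (n%:R : R)) + 29 * sigma) * sigma / Num.sqrt (n%:R : R).
Proof. move=> hn hs hz hW hxo hph; exact: (main hn hs hz hW hxo hph). Qed.
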